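(* Let $\varepsilon,\gamma>0$ and $\delta>0$, and let $d\geq \frac{1}{(2\varepsilon+\gamma)^{1/\gamma}}$. There is a ReLU neural network of depth $7$, width $\mathcal O(d^{\max(4\varepsilon+2\gamma,1)})$ and magnitude of weights bounded by $1/\delta$ which, given any $(d,\varepsilon)$-sparse vector $\mathbf{x}'\in\mathcal S^d_\delta$ as input, returns a vector $\mathbf{x}''$ of dimension $d^{\varepsilon}$ containing all the non-zero entries of $\mathbf{x}'$, padded with $0$'s if $\mathbf{x}'$ has fewer than $d^{\varepsilon}$ non-zero entries.
   Context: A vector $\mathbf{x}\in\mathbb{R}^d$ is $(d,\varepsilon)$-sparse if it has at most $d^{\varepsilon}$ non-zero entries. $\mathcal S^d_\delta$ is the set of vectors $\mathbf{x}\in\mathbb{R}^d$ whose non-zero entries all lie in $[\delta,1-\delta]$ and are pairwise at distance at least $\delta$. A ReLU network applies $[z]_+=\max\{0,z\}$ after each affine hidden map, with an affine output layer; depth is the number of hidden layers plus one; width is the number of neurons in the largest hidden layer. *)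

(* Defs.v *)
From HB Require Import structures.
From mathcomp Require Import all_boot all_order all_algebra.
From mathcomp Require Import all_classical all_reals all_analysis.
Set Implicit Arguments. Unset Strict Implicit. Unset Printing Implicit Defensive.
Import Order.TTheory GRing.Theory Num.Theory.
Local Open Scope ring_scope.

Section ReLU.
Variable R : realType.

Definition relu_vec (n : nat) (v : 'cV[R]_n) : 'cV[R]_n :=
  \col_i Num.max 0 (v i 0).

Inductive relu_net : nat -> nat -> Type :=
| OutLayer (n m : nat) : 'M[R]_(m, n) -> 'cV[R]_m -> relu_net n m
| HidLayer (n h m : nat) : 'M[R]_(h, n) -> 'cV[R]_h -> relu_net h m -> relu_net n m.

Fixpoint net_eval (n m : nat) (N : relu_net n m) : 'cV[R]_n -> 'cV[R]_m :=
  match N in relu_net n m return 'cV[R]_n -> 'cV[R]_m with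
  | OutLayer _ _ W b => fun x => W *m x + b
  | HidLayer _ _ _ W b N' => fun x => net_eval N' (relu_vec (W *m x + b))
  end.

Fixpoint net_depth (n m : nat) (N : relu_net n m) : nat :=
  match N with
  | OutLayer _ _ _ _ => 1%N
  | HidLayer _ _ _ _ _ N' => (net_depth N').+1
  end.

Fixpoint net_width (n m : nat) (N : relu_net n m) : nat :=
  match N with
  | OutLayer _ _ _ _ => 0%N
  | @HidLayer _ h _ _ _ N' => maxn h (net_width N')
  end.

Fixpoint net_weights_bounded (B : R) (n m : nat) (N : relu_net n m) : Prop :=
  match N with
  | OutLayer _ _ W b => (forall i j, `|W i j| <= B) /\ (forall i, `|b i 0| <= B)
  | HidLayer _ _ _ W b N' =>
      [/\ (forall i j, `|W i j| <= B), (forall i, `|b i 0| <= B)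
        & net_weights_bounded B N']
  end.

End ReLU.

Definition nnz (R : realType) (d : nat) (x : 'cV[R]_d) : nat :=
  #|[set i | x i 0 != 0]|.

Definition sparse (R : realType) (d : nat) (eps : R) (x : 'cV[R]_d) : Prop :=
  (nnz x)%:R <= (d%:R) `^ eps.

Definition in_S (R : realType) (d : nat) (delta : R) (x : 'cV[R]_d) : Prop :=
  (forall i, x i 0 != 0 -> delta <= x i 0 <= 1 - delta) /\
  (forall i j, i != j -> x i 0 != 0 -> x j 0 != 0 -> delta <= `|x i 0 - x j 0|).

Definition compacts (R : realType) (d k : nat) (x : 'cV[R]_d) (y : 'cV[R]_k) : Prop :=
  exists sigma : 'I_d -> 'I_k,
    {in [set i | x i 0 != 0] &, injective sigma} /\
    (forall i, x i 0 != 0 -> y (sigma i) 0 = x i 0) /\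
    (forall j, (forall i, x i 0 != 0 -> sigma i != j) -> y j 0 = 0).

(* Main.v *)
Require Import Defs.
From HB Require Import structures.
From mathcomp Require Import all_boot all_order all_algebra.
From mathcomp Require Import all_classical all_reals all_analysis.
From mathcomp Require Import ring lra zify.
Import Order.TTheory GRing.Theory Num.Theory.
Local Open Scope ring_scope.
Set Implicit Arguments. Unset Strict Implicit. Unset Printing Implicit Defensive.
Local Open Scope nat_scope.

Lemma union_bound (T I : finType) (P : I -> pred T) :
  #|[pred x | [exists i, P i x]]| <= \sum_i #|P i|.
Proof.
rewrite -sum1_card big_mkcond /=.
apply: (@leq_trans (\sum_x \sum_i (P i x : nat))).
  apply: leq_sum => x _; rewrite inE /=.
  by case: existsP => [[i Pi]|] //; rewrite (bigD1 i) //= Pi.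
rewrite exchange_big /=; apply: leq_sum => i _.
rewrite -sum1_card [X in _ <= X]big_mkcond /=; apply: leq_sum => x _. by rewrite unfold_in; case: (P i x).
Qed.

Section Hash.
Variables d q k : nat.
Local Notation FF := {ffun 'I_d -> 'I_q}.

Definition injon (f : FF) (g : {ffun 'I_k -> option 'I_d}) : bool :=
  [forall a, forall b, match g a, g b with
     | Some i, Some j => (i != j) ==> (f i != f j) | _, _ => true end].

Definition pairbad (g : {ffun 'I_k -> option 'I_d}) (ab : 'I_k * 'I_k) (f : FF) : bool :=
  match g ab.1, g ab.2 with Some i, Some j => (i != j) && (f i == f j) | _, _ => false end.

Lemma card_collide (i j : 'I_d) : i != j ->
  #|[pred f : FF | f i == f j]| * q <= q ^ d.
Proof.
move=> nij.
pose phi (p : FF * 'I_q) : FF := [ffun x => if x == j then p.2 else p.1 x].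
have -> : #|[pred f : FF | f i == f j]| * q =
          #|finset.setX [set f : FF | f i == f j] [set: 'I_q]|.
  by rewrite cardsX cardsT card_ord cardsE.
rewrite -(@card_in_imset _ _ phi).
  by apply: (leq_trans (max_card _)); rewrite card_ffun !card_ord.
move=> [f c] [f' c']; rewrite !inE /= => /andP[/eqP fij _] /andP[/eqP fij' _] E.
have Ex : forall x, phi (f, c) x = phi (f', c') x by move=> x; rewrite E.
have Ec : c = c' by have := Ex j; rewrite !ffunE eqxx.
congr pair => //; apply/ffunP => x.
case: (eqVneq x j) => [->|xj]; last by have := Ex x; rewrite !ffunE (negbTE xj).
by rewrite -fij -fij'; have := Ex i; rewrite !ffunE (negbTE nij).
Qed.

Lemma card_NI (g : {ffun 'I_k -> option 'I_d}) :
  #|[pred f : FF | ~~ injon f g]| * q <= k * k * q ^ d.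
Proof.
apply: (@leq_trans (#|[pred f : FF | [exists ab, pairbad g ab f]]| * q)).
  rewrite leq_mul2r; apply/orP; right; apply: subset_leq_card; apply/fintype.subsetP => f.
  rewrite !inE /injon negb_forall => /existsP [a]; rewrite negb_forall => /existsP [b].
  case E1: (g a) => [i|] //; case E2: (g b) => [j|] //; rewrite negb_imply negbK => H.
  by apply/existsP; exists (a, b); rewrite /pairbad /= E1 E2.
apply: (@leq_trans ((\sum_ab #|pairbad g ab|) * q)).
  by rewrite leq_mul2r union_bound orbT.
rewrite big_distrl /=.
apply: (@leq_trans (\sum_(ab : 'I_k * 'I_k) q ^ d)); last first.
  by rewrite sum_nat_const card_prod !card_ord.
apply: leq_sum => [[a b]] _; rewrite /pairbad /=.
case: (g a) => [i|]; last by rewrite (eq_card0 (fun _ => erefl)).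
case: (g b) => [j|]; last by rewrite (eq_card0 (fun _ => erefl)).
case: (eqVneq i j) => [_|nij]; first by rewrite (eq_card0 (fun _ => erefl)).
by rewrite (eq_card (B := [pred f : FF | f i == f j])) //; exact: card_collide.
Qed.

End Hash.

Lemma hash_family (d k : nat) :
  exists fam : 'I_(k * (trunc_log 2 d.+1).+1).+1 -> 'I_d -> 'I_(2 * k ^ 2).+1,
  forall S : {set 'I_d}, #|S| <= k -> exists l, {in S &, injective (fam l)}.
Proof.
set q := (2 * k ^ 2).+1; set L := (k * (trunc_log 2 d.+1).+1).+1.
pose FF := {ffun 'I_d -> 'I_q}.
pose NI (g : {ffun 'I_k -> option 'I_d}) := [pred f : FF | ~~ injon f g].
pose bad := [pred fam : {ffun 'I_L -> FF} | [exists g, fam \in ffun_on (NI g)]].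
have q0 : 0 < q by [].
have NIb g : 2 * #|NI g| <= q ^ d.
  have H := @card_NI d q k g.
  have H2 : 2 * #|NI g| * q <= q ^ d * q.
    apply: (@leq_trans (2 * (k * k * q ^ d))); first by rewrite -mulnA leq_mul2l H orbT.
    by rewrite mulnA [_ * q]mulnC leq_mul2r /q -mulnn mulnA ltnW ?orbT.
  by rewrite leq_pmul2r in H2.
have cbad : #|bad| < #|{ffun 'I_L -> FF}|.
  rewrite card_ffun card_ffun !card_ord.
  rewrite -(ltn_pmul2l (expn_gt0 2 L)).
  apply: (@leq_ltn_trans (2 ^ L * \sum_g #|[pred fam : {ffun 'I_L -> FF} | fam \in ffun_on (NI g)]|)).
    by rewrite leq_mul2l (union_bound (fun g (fam : {ffun 'I_L -> FF}) => fam \in ffun_on (NI g))) orbT.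
  rewrite big_distrr /=.
  apply: (@leq_ltn_trans (\sum_(g : {ffun 'I_k -> option 'I_d}) (q ^ d) ^ L)).
    apply: leq_sum => g _; rewrite (eq_card (B := ffun_on (NI g))) // card_ffun_on card_ord -expnMn.
    by rewrite leq_exp2r // NIb.
  rewrite sum_nat_const card_ffun card_option !card_ord ltn_mul2r !expn_gt0 q0 /=.
  apply: (@leq_ltn_trans (2 ^ (k * (trunc_log 2 d.+1).+1))); last by rewrite /L ltn_exp2l.
  rewrite mulnC expnM; case: (posnP k) => [->|kp]; first by rewrite !expn0.
  by rewrite leq_exp2r // (ltn_trans (ltnSn d)) // trunc_log_ltn.
have [fam0 Hf] : exists fam0 : {ffun 'I_L -> FF}, fam0 \notin bad.
  case: (pickP [pred fam | fam \notin bad]) => [fam0 H|H]; first by exists fam0.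
  exfalso; move: cbad; rewrite ltnNge => /negP; apply.
  apply: subset_leq_card; apply/fintype.subsetP => fam _; have := H fam; rewrite /= => /negbFE.
  by [].
exists (fun l => fam0 l) => S HS.
pose g : {ffun 'I_k -> option 'I_d} := [ffun a : 'I_k => nth None (map Some (enum S)) (nat_of_ord a)].
have : fam0 \notin ffun_on (NI g).
  by apply: contra Hf => H; apply/existsP; exists g.
move=> /ffun_onP H; have [l Hl] : exists l, ~~ (fam0 l \in NI g).
  by apply/existsP; rewrite -negb_forall; apply/negP => /forallP H2; apply: H => l; exact: H2.
exists l; move: Hl; rewrite inE negbK => /forallP Hl x y xS yS Exy.
have ix z : z \in S -> (index z (enum S) < k)%N.
  move=> zS; apply: (leq_trans _ HS); rewrite cardE index_mem mem_enum //.
have gz z (zS : z \in S) : g (Ordinal (ix z zS)) = Some z.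
  rewrite ffunE /= (nth_map z) ?index_mem ?mem_enum //.
  by rewrite nth_index ?mem_enum.
have := Hl (Ordinal (ix x xS)) => /forallP /(_ (Ordinal (ix y yS))).
rewrite gz gz; case: (eqVneq x y) => //= _.
by rewrite Exy eqxx.
Qed.
Local Open Scope ring_scope.
Section Gen.
Variable R : realType.

Definition LW (m n : nat) (A B : finType) (sb : 'I_m -> B) (sa : 'I_n -> A)
  (w : B -> A -> R) : 'M[R]_(m, n) := \matrix_(i, j) w (sb i) (sa j).
Definition Lb (m : nat) (B : finType) (sb : 'I_m -> B) (c : B -> R) : 'cV[R]_m :=
  \col_i c (sb i).

Lemma layer_eval (m n : nat) (A B : finType) (sb : 'I_m -> B) (sa : 'I_n -> A)
  (sab : bijective sa) w c (x : 'cV[R]_n) (u : A -> R) :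
  (forall j, x j 0 = u (sa j)) ->
  forall i, (LW sb sa w *m x + Lb sb c) i 0 = \sum_a w (sb i) a * u a + c (sb i).
Proof.
move=> Hx i; rewrite !mxE; congr (_ + _).
rewrite (reindex sa) /=; last by case: sab => g h1 h2; exists g => ? ?.
by apply: eq_bigr => j _; rewrite !mxE Hx.
Qed.

Definition relu (z : R) := Num.max 0 z.

Definition ev (T : finType) : 'I_#|T| -> T := @enum_val T (pred_of_simpl predT).

Lemma ev_bij (T : finType) : bijective (@ev T).
Proof. exact: enum_val_bij. Qed.

Variables (d k : nat) (B1 B2 B3 B4 B5 B6 : finType).
Variables (w1 : B1 -> 'I_d -> R) (c1 : B1 -> R)
          (w2 : B2 -> B1 -> R) (c2 : B2 -> R)
          (w3 : B3 -> B2 -> R) (c3 : B3 -> R)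
          (w4 : B4 -> B3 -> R) (c4 : B4 -> R)
          (w5 : B5 -> B4 -> R) (c5 : B5 -> R)
          (w6 : B6 -> B5 -> R) (c6 : B6 -> R)
          (w7 : 'I_k -> B6 -> R) (c7 : 'I_k -> R).

Definition net7 : relu_net R d k :=
  HidLayer (LW (@ev B1) id w1) (Lb (@ev B1) c1)
  (HidLayer (LW (@ev B2) (@ev B1) w2) (Lb (@ev B2) c2)
  (HidLayer (LW (@ev B3) (@ev B2) w3) (Lb (@ev B3) c3)
  (HidLayer (LW (@ev B4) (@ev B3) w4) (Lb (@ev B4) c4)
  (HidLayer (LW (@ev B5) (@ev B4) w5) (Lb (@ev B5) c5)
  (HidLayer (LW (@ev B6) (@ev B5) w6) (Lb (@ev B6) c6)
  (OutLayer (LW id (@ev B6) w7) (Lb id c7))))))).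

Lemma net7_depth : net_depth net7 = 7%N.
Proof. by []. Qed.

Lemma net7_width : net_width net7 =
  maxn #|B1| (maxn #|B2| (maxn #|B3| (maxn #|B4| (maxn #|B5| (maxn #|B6| 0))))).
Proof. by []. Qed.

Lemma net7_bounded (Bd : R) :
  (forall b a, `|w1 b a| <= Bd) -> (forall b, `|c1 b| <= Bd) ->
  (forall b a, `|w2 b a| <= Bd) -> (forall b, `|c2 b| <= Bd) ->
  (forall b a, `|w3 b a| <= Bd) -> (forall b, `|c3 b| <= Bd) ->
  (forall b a, `|w4 b a| <= Bd) -> (forall b, `|c4 b| <= Bd) ->
  (forall b a, `|w5 b a| <= Bd) -> (forall b, `|c5 b| <= Bd) ->
  (forall b a, `|w6 b a| <= Bd) -> (forall b, `|c6 b| <= Bd) ->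
  (forall b a, `|w7 b a| <= Bd) -> (forall b, `|c7 b| <= Bd) ->
  net_weights_bounded Bd net7.
Proof.
move=> *; rewrite /=.
by do ! split => //= *; rewrite ?mxE.
Qed.

Definition layer (A B : finType) (w : B -> A -> R) (c : B -> R) (u : A -> R) : B -> R :=
  fun b => relu (\sum_a w b a * u a + c b).

Lemma net7_eval (x : 'cV[R]_d) (i : 'I_k) :
  net_eval net7 x i 0 =
  let u1 := layer w1 c1 (fun j => x j 0) in
  let u2 := layer w2 c2 u1 in
  let u3 := layer w3 c3 u2 in
  let u4 := layer w4 c4 u3 in
  let u5 := layer w5 c5 u4 in
  let u6 := layer w6 c6 u5 in
  \sum_b w7 i b * u6 b + c7 i.
Proof.
have step (n : nat) (A B : finType) (sa : 'I_n -> A) (sab : bijective sa) w c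
   (y : 'cV[R]_n) (u : A -> R) : (forall j, y j 0 = u (sa j)) ->
   forall j, relu_vec (LW (@ev B) sa w *m y + Lb (@ev B) c) j 0 = layer w c u (ev j).
  by move=> Hy j; rewrite /relu_vec mxE (@layer_eval _ _ _ _ (@ev B) sa sab w c y u Hy).
rewrite /= (@layer_eval _ _ _ _ id _ (ev_bij B6) w7 c7 _ (layer w6 c6 (layer w5 c5 (layer w4 c4 (layer w3 c3 (layer w2 c2 (layer w1 c1 (fun j => x j 0)))))))) //.
apply: (step); first exact: ev_bij. apply: (step); first exact: ev_bij. apply: (step); first exact: ev_bij.
apply: (step); first exact: ev_bij. apply: (step); first exact: ev_bij.
by apply: (step) => //; exists id.
Qed.

End Gen.
Section Cons.
Variables (R : realType) (delta : R) (d k L q : nat) (fam : 'I_L -> 'I_d -> 'I_q).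
Local Notation F := 'I_L.
Local Notation V := 'I_q.
Local Notation FV := ('I_L * 'I_q)%type.
Local Notation K := 'I_k.
Local Notation D := 'I_d.
Local Notation "b %:B" := ((b : bool)%:R : R) (at level 2, format "b %:B").

Definition B1 := ((D + D) + FV)%type.
Definition w1 (b : B1) (i : D) : R := match b with
  | inl (inl i') => (i' == i)%:B
  | inl (inr i') => (i' == i)%:B / delta
  | inr p => (fam p.1 i == p.2)%:B end.
Definition c1 (b : B1) : R := match b with inl (inl _) => 0 | _ => -1 end.

Definition B2 := ((FV + FV) + FV)%type.
Definition w2 (b : B2) (a : B1) : R := match b, a with
  | inl (inl p), inl (inl i) => (fam p.1 i == p.2)%:B / delta
  | inl (inl p), inl (inr i) => - (fam p.1 i == p.2)%:B
  | inl (inr p), inl (inl i) => (fam p.1 i == p.2)%:B / delta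
  | inl (inr p), inl (inr i) => - (fam p.1 i == p.2)%:B
  | inr p, inl (inl i) => (fam p.1 i == p.2)%:B
  | inr p, inr p' => - (p' == p)%:B
  | _, _ => 0 end.
Definition c2 (b : B2) : R := match b with inl (inr _) => -1 | _ => 0 end.

Definition B3 := ((((F + F) + FV) + FV) + F)%type.
Definition w3 (b : B3) (a : B2) : R := match b, a with
  | inl (inl (inl (inl f))), inl (inr p) => (p.1 == f)%:B
  | inl (inl (inl (inr f))), inl (inr p) => (p.1 == f)%:B
  | inl (inl (inr p)), inl (inl p') => (p' == p)%:B
  | inl (inl (inr p)), inl (inr p') => - (p' == p)%:B
  | inl (inr p), inr p' => (p' == p)%:B
  | _, _ => 0 end.
Definition c3 (b : B3) : R := match b with
  | inl (inl (inl (inr _))) => -1 | inr _ => 1 | _ => 0 end.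

Definition B4 := ((F + FV) + FV)%type.
Definition w4 (b : B4) (a : B3) : R := match b, a with
  | inl (inl f), inl (inl (inl (inl f'))) => if f' == f then -1 else (f' < f)%N%:B
  | inl (inl f), inl (inl (inl (inr f'))) => if f' == f then 1 else - (f' < f)%N%:B
  | inl (inl f), inr f' => - (f' < f)%N%:B
  | inl (inr p), inl (inl (inr p')) => (p' == p)%:B
  | inr p, inl (inr p') => (p' == p)%:B
  | _, _ => 0 end.
Definition c4 (b : B4) : R := match b with inl (inl _) => 1 | _ => 0 end.

Definition B5 := ((FV + FV) + K)%type.
Definition w5 (b : B5) (a : B4) : R := match b, a with
  | inl (inl p), inl (inl f) => (f == p.1)%:B
  | inl (inl p), inr p' => (p' == p)%:B
  | inl (inr p), inl (inl f) => (f == p.1)%:B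
  | inl (inr p), inl (inr p') => (p' == p)%:B
  | _, _ => 0 end.
Definition c5 (b : B5) : R := match b with inr _ => 1 | _ => -1 end.

Definition B6 := ((((V * K) + (V * K)) + (V * K)) + (V * K))%type.
Definition Tcoef (v : V) (a : B5) : R := match a with
  | inl (inl p) => (p.2 == v)%:B | _ => 0 end.
Definition Dcoef (p : V * K) (a : B5) : R := match a with
  | inl (inl _) => 0
  | inl (inr fw) => (fw.2 < p.1)%N%:B
  | inr l => - (l < p.2)%N%:B end.
Definition w6 (b : B6) (a : B5) : R := match b with
  | inl (inl (inl p)) => Tcoef p.1 a + Dcoef p a
  | inl (inl (inr p)) => Tcoef p.1 a + Dcoef p a
  | inl (inr p) => Dcoef p a
  | inr p => Dcoef p a end.
Definition c6 (b : B6) : R := match b with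
  | inl (inl (inl _)) => 0 | inl (inl (inr _)) => -1 | inl (inr _) => 0 | inr _ => -1 end.

Definition w7 (j : K) (b : B6) : R := match b with
  | inl (inl (inl p)) => (p.2 == j)%:B
  | inl (inl (inr p)) => - (p.2 == j)%:B
  | inl (inr p) => - (p.2 == j)%:B
  | inr p => (p.2 == j)%:B end.
Definition c7 (j : K) : R := 0.

Definition theNet := net7 w1 c1 w2 c2 w3 c3 w4 c4 w5 c5 w6 c6 w7 c7.

End Cons.
Section Bnd.
Variables (R : realType) (delta : R) (d k L q : nat) (fam : 'I_L -> 'I_d -> 'I_q).
Hypothesis d0 : 0 < delta.
Hypothesis d1 : delta <= 1.

Let one_le : 1 <= 1 / delta.
Proof. by rewrite ler_pdivlMr // mul1r. Qed.
Let zle : 0 <= 1 / delta.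
Proof. by rewrite divr_ge0 // ltW. Qed.

Let nb (b : bool) : `|(b%:R : R)| <= 1 / delta.
Proof. by case: b; rewrite ?normr1 ?normr0. Qed.
Let nbN (b : bool) : `|- (b%:R : R)| <= 1 / delta.
Proof. by rewrite normrN. Qed.
Let nbV (b : bool) : `|(b%:R : R) / delta| <= 1 / delta.
Proof. by case: b; rewrite ?mul0r ?normr0 // ger0_norm. Qed.
Let n0 : `|(0 : R)| <= 1 / delta.
Proof. by rewrite normr0. Qed.
Let n1 : `|(1 : R)| <= 1 / delta.
Proof. by rewrite normr1. Qed.
Let nN1 : `|(-1 : R)| <= 1 / delta.
Proof. by rewrite normrN normr1. Qed.

Ltac fin := rewrite /= ?addr0 ?add0r;
  first [ exact: nb | exact: nbN | exact: nbV | exact: n0 | exact: n1 | exact: nN1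
        | (case: ifP => _; first [exact: nbN | exact: nb | exact: n1 | exact: nN1]) ].
Ltac dsum := repeat match goal with [ x : ?T |- _ ] =>
  let T' := eval hnf in T in match T' with sum _ _ => destruct x end end.

Lemma theNet_bounded : net_weights_bounded (1 / delta) (@theNet _ delta d k L q fam).
Proof.
apply: net7_bounded => b; try move=> a; dsum; rewrite /w1 /c1 /w2 /c2 /w3 /c3 /w4 /c4 /w5 /c5 /w6 /c6 /w7 /c7 /Tcoef /Dcoef /=. all: fin.
Qed.
End Bnd.
Section Sem.
Variables (R : realType) (delta : R) (d k L q : nat) (fam : 'I_L -> 'I_d -> 'I_q).
Local Notation F := 'I_L.
Local Notation V := 'I_q.
Local Notation FV := ('I_L * 'I_q)%type.
Local Notation K := 'I_k.
Local Notation D := 'I_d.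
Local Notation "b %:B" := ((b : bool)%:R : R) (at level 2, format "b %:B").
Hypothesis d0 : 0 < delta.
Variable x : 'cV[R]_d.
Hypothesis hx : forall i, x i 0 != 0 -> delta <= x i 0 <= 1 - delta.

Local Notation xi i := (x i 0).

Lemma sum0mul (T : finType) (G : T -> R) : \sum_a 0 * G a = 0.
Proof. by rewrite big1 // => a _; rewrite mul0r. Qed.

Lemma sum_ind (T : finType) (P : pred T) (G : T -> R) :
  \sum_a (P a)%:B * G a = \sum_(a | P a) G a.
Proof. by rewrite [RHS]big_mkcond; apply: eq_bigr => a _; case: (P a); rewrite ?mul1r ?mul0r. Qed.

Lemma sum_delta (T : finType) (b : T) (G : T -> R) :
  \sum_a (a == b)%:B * G a = G b.
Proof. by rewrite sum_ind big_pred1_eq. Qed.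

Lemma sum_deltaC (T : finType) (b : T) (G : T -> R) :
  \sum_a (b == a)%:B * G a = G b.
Proof. by rewrite -(sum_delta b); apply: eq_bigr => a _; rewrite eq_sym. Qed.

Lemma relu_id (z : R) : 0 <= z -> relu z = z.
Proof. by move=> z0; rewrite /relu max_r. Qed.
Lemma relu_0 (z : R) : z <= 0 -> relu z = 0.
Proof. by move=> z0; rewrite /relu max_l. Qed.
Lemma relu_ge0 (z : R) : 0 <= relu z.
Proof. by rewrite /relu le_max lexx. Qed.

Lemma xge0 i : 0 <= xi i.
Proof.
case: (eqVneq (xi i) 0) => [->//|nz].
by have /andP[h _] := hx nz; apply: le_trans h; apply: ltW.
Qed.

Lemma xle1 i : xi i <= 1.
Proof.
case: (eqVneq (xi i) 0) => [->//|nz].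
have /andP[_ h] := hx nz; apply: le_trans h _.
by rewrite lerBlDr lerDl ltW.
Qed.

Definition nz i := xi i != 0.

Lemma nzi i : xi i / delta - relu (xi i / delta - 1) = (nz i)%:B.
Proof.
rewrite /nz; case: (eqVneq (xi i) 0) => [->|nzx] /=.
  by rewrite mul0r relu_0 ?subr0 // sub0r lerN10.
have /andP[h _] := hx nzx.
rewrite relu_id; first by rewrite opprB addrC subrK.
by rewrite subr_ge0 ler_pdivlMr // mul1r.
Qed.

Definition bs (p : FV) : R := \sum_(i | fam p.1 i == p.2) xi i.

Definition u1 := layer (@w1 R delta d L q fam) (@c1 R d L q) (fun j => x j 0).

Lemma L1a i : u1 (inl (inl i)) = xi i.
Proof.
rewrite /u1 /layer /= addr0 sum_deltaC relu_id //; exact: xge0.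
Qed.

Lemma L1m i : u1 (inl (inr i)) = relu (xi i / delta - 1).
Proof.
rewrite /u1 /layer /=; congr (relu (_ - _)).
under eq_bigr do rewrite mulrAC.
by rewrite -mulr_suml sum_deltaC.
Qed.

Lemma L1s p : u1 (inr p) = relu (bs p - 1).
Proof. by rewrite /u1 /layer /= sum_ind. Qed.


Definition cnt (p : FV) : nat := #|[set i | nz i & fam p.1 i == p.2]|.

Lemma sum_bb (T : finType) (a b : pred T) :
  \sum_i (a i)%:B * (b i)%:B = #|[set i | b i & a i]|%:R.
Proof.
rewrite -sum1dep_card natr_sum [RHS]big_mkcond; apply: eq_bigr => i _.
by case: (a i); case: (b i); rewrite /= ?mul1r ?mul0r.
Qed.

Definition u2 := layer (@w2 R delta d L q fam) (@c2 R L q) u1.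

Lemma nsum p : \sum_i (fam p.1 i == p.2)%:B / delta * u1 (inl (inl i)) +
    \sum_i (- (fam p.1 i == p.2)%:B) * u1 (inl (inr i)) = (cnt p)%:R.
Proof.
rewrite -big_split /= -sum_bb; apply: eq_bigr => i _.
by rewrite L1a L1m -nzi mulNr mulrBr mulrA mulrAC.
Qed.

Lemma L2N p : u2 (inl (inl p)) = (cnt p)%:R.
Proof.
rewrite /u2 /layer !big_sumType /= sum0mul addr0 addr0 nsum relu_id //.
Qed.

Lemma L2P p : u2 (inl (inr p)) = (cnt p - 1)%:R.
Proof.
rewrite /u2 /layer !big_sumType /= sum0mul addr0 nsum.
case: (posnP (cnt p)) => [->|cp]; first by rewrite sub0n relu_0 // sub0r lerN10.
by rewrite natrB // relu_id // subr_ge0 ler1n.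
Qed.

Definition clip (z : R) := Num.min z 1.

Lemma bs_ge0 p : 0 <= bs p.
Proof. by apply: sumr_ge0 => i _; exact: xge0. Qed.

Lemma L2c p : u2 (inr p) = clip (bs p).
Proof.
rewrite /u2 /layer !big_sumType /= sum0mul addr0 sum_ind.
rewrite (eq_bigr (fun p' => - ((p' == p)%:B * u1 (inr p')))); last by move=> ? _; rewrite mulNr.
rewrite sumrN sum_delta L1s addr0 /clip.
rewrite (eq_bigr (fun a => xi a)); last by move=> ? _; rewrite L1a.
rewrite -/(bs p).
case: (leP (bs p) 1) => h.
  by rewrite (@relu_0 (bs p - 1)) ?subr_le0 // subr0 relu_id ?bs_ge0 // min_l.
by rewrite (@relu_id (bs p - 1)) ?subr_ge0 ?ltW // opprB addrC subrK relu_id // min_r // ltW.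
Qed.


Lemma sum_fst (f : F) (G : FV -> R) :
  \sum_(p : FV) (p.1 == f)%:B * G p = \sum_v G (f, v).
Proof.
rewrite sum_ind.
transitivity (\sum_(p : FV | (p.1 == f) && predT p.2) G (p.1, p.2)).
  by apply: eq_big => [[a b]|[a b] _] //=; rewrite andbT.
by rewrite -(pair_big (pred1 f) predT (fun a b => G (a, b))) /= big_pred1_eq.
Qed.

Definition E (f : F) : nat := \sum_v (cnt (f, v) - 1).

Definition u3 := layer (@w3 R L q) (@c3 R L q) u2.

Lemma Esum f : \sum_(p : FV) (p.1 == f)%:B * u2 (inl (inr p)) = (E f)%:R.
Proof.
rewrite sum_fst /E natr_sum; apply: eq_bigr => v _; exact: L2P.
Qed.

Lemma L3e f : u3 (inl (inl (inl (inl f)))) = (E f)%:R.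
Proof.
by rewrite /u3 /layer !big_sumType /= !sum0mul add0r !addr0 Esum relu_id.
Qed.

Lemma L3e' f : u3 (inl (inl (inl (inr f)))) = (E f - 1)%:R.
Proof.
rewrite /u3 /layer !big_sumType /= !sum0mul add0r !addr0 Esum.
case: (posnP (E f)) => [->|cp]; first by rewrite sub0n relu_0 // sub0r lerN10.
by rewrite natrB // relu_id // subr_ge0 ler1n.
Qed.

Lemma L3qq p : u3 (inl (inl (inr p))) = (0 < cnt p)%N%:B.
Proof.
rewrite /u3 /layer !big_sumType /= !sum0mul !addr0 sum_delta.
rewrite (eq_bigr (fun p' => - ((p' == p)%:B * u2 (inl (inr p'))))); last by move=> ? _; rewrite mulNr.
rewrite sumrN sum_delta L2N L2P.
case: (posnP (cnt p)) => [->|cp]; first by rewrite subrr relu_0.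
by rewrite natrB // opprB addrC subrK relu_id.
Qed.

Lemma clip_ge0 z : 0 <= z -> 0 <= clip z.
Proof. by move=> z0; rewrite /clip le_min z0 ler01. Qed.

Lemma L3c p : u3 (inl (inr p)) = clip (bs p).
Proof.
rewrite /u3 /layer !big_sumType /= !sum0mul !add0r addr0 sum_delta L2c relu_id //.
exact/clip_ge0/bs_ge0.
Qed.

Lemma L3o f : u3 (inr f) = 1.
Proof.
by rewrite /u3 /layer !big_sumType /= !sum0mul !add0r relu_id.
Qed.


Definition bad (f : F) : bool := (0 < E f)%N.
Definition ngood (f : F) : nat := #|[set f' : F | ~~ bad f' & (f' < f)%N]|.
Definition sel (f : F) : bool := ~~ bad f && (ngood f == 0%N).

Lemma zval f : (E f)%:R - (E f - 1)%:R = (bad f)%:B :> R.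
Proof.
rewrite /bad; case: (posnP (E f)) => [->|cp]; first by rewrite sub0n subrr.
by rewrite natrB // opprB addrC subrK.
Qed.

Definition u4 := layer (@w4 R L q) (@c4 R L q) u3.

Lemma L4g f : u4 (inl (inl f)) = (sel f)%:B.
Proof.
rewrite /u4 /layer !big_sumType /= !sum0mul !addr0.
rewrite -!big_split /=.
rewrite (eq_bigr (fun f' : F => (f' == f)%:B * (- (bad f')%:B) +
     (f' < f)%N%:B * (- (~~ bad f')%:B))); last first.
  move=> f' _; rewrite L3e L3e' L3o.
  have -> : (E f')%:R = (E f' - 1)%:R + (bad f')%:B :> R by rewrite -zval; ring.
  case: (eqVneq f' f) => [->|nf]; rewrite ?eqxx ?(negbTE nf) ?ltnn;
  case: (f' < f)%N; case: (bad _); rewrite /=; ring.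
rewrite big_split /= sum_delta.
rewrite (eq_bigr (fun f' : F => - ((f' < f)%N%:B * (~~ bad f')%:B))); last by move=> ? _; rewrite mulrN.
rewrite sumrN sum_bb -/(ngood f) /sel.
have n0 := ler0n R (ngood f).
case: (bad f); rewrite /= ?mulr1n ?mulr0n ?oppr0.
  by rewrite relu_0 //; lra.
case: (eqVneq (ngood f) 0%N) => [->|ng] /=.
  by rewrite relu_id; lra.
have n1 : 1 <= (ngood f)%:R :> R by rewrite ler1n lt0n.
by rewrite relu_0 //; lra.
Qed.

Lemma L4qq p : u4 (inl (inr p)) = (0 < cnt p)%N%:B.
Proof.
rewrite /u4 /layer !big_sumType /= !sum0mul !addr0 !add0r sum_delta L3qq relu_id //.
Qed.

Lemma L4c p : u4 (inr p) = clip (bs p).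
Proof.
rewrite /u4 /layer !big_sumType /= !sum0mul !addr0 !add0r sum_delta L3c relu_id //.
exact/clip_ge0/bs_ge0.
Qed.

Definition u5 := layer (@w5 R k L q) (@c5 R k L q) u4.

Lemma clip_le1 z : clip z <= 1.
Proof. by rewrite /clip ge_min lexx orbT. Qed.

Lemma gate (b : bool) (z : R) : 0 <= z -> z <= 1 -> relu (b%:B + z - 1) = b%:B * z.
Proof.
move=> z0 z1; case: b => /=; rewrite ?mulr1n ?mulr0n ?mul1r ?mul0r.
  by rewrite relu_id; lra.
by rewrite relu_0; lra.
Qed.

Lemma L5t p : u5 (inl (inl p)) = (sel p.1)%:B * clip (bs p).
Proof.
rewrite /u5 /layer !big_sumType /= !sum0mul !addr0.
rewrite !sum_delta L4g L4c gate //; [exact/clip_ge0/bs_ge0 | exact: clip_le1].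
Qed.

Lemma L5u p : u5 (inl (inr p)) = (sel p.1)%:B * (0 < cnt p)%N%:B.
Proof.
rewrite /u5 /layer !big_sumType /= !sum0mul !addr0.
by rewrite !sum_delta L4g L4qq gate //; case: (0 < cnt p)%N.
Qed.

Lemma L5o l : u5 (inr l) = 1.
Proof.
by rewrite /u5 /layer !big_sumType /= !sum0mul !add0r relu_id.
Qed.


Lemma sum_snd (A B : finType) (P : pred B) (G : A * B -> R) :
  \sum_(p : A * B) (P p.2)%:B * G p = \sum_b (P b)%:B * \sum_a G (a, b).
Proof.
transitivity (\sum_a \sum_b (P b)%:B * G (a, b)).
  by rewrite pair_bigA; apply: eq_bigr => -[a b].
by rewrite exchange_big; apply: eq_bigr => b _; rewrite mulr_sumr.
Qed.

Lemma sum_lt (j : K) : \sum_(l : K) (l < j)%N%:B = (j : nat)%:R :> R.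
Proof.
transitivity (\sum_(l : K | (l < j)%N) (1 : R)).
  by rewrite -[in RHS]sum_ind; apply: eq_bigr => l _; rewrite mulr1.
by rewrite -(big_ord_widen _ (fun _ => (1:R)) (ltnW (ltn_ord j))) sumr_const card_ord.
Qed.

Definition T (v : V) : R := \sum_f (sel f)%:B * clip (bs (f, v)).
Definition U (w : V) : R := \sum_f (sel f)%:B * (0 < cnt (f, w))%N%:B.
Definition Dv (p : V * K) : R := \sum_(w : V) (w < p.1)%N%:B * U w - (p.2 : nat)%:R.

Definition u6 := layer (@w6 R k L q) (@c6 R k q) u5.

Lemma ST v : \sum_a @Tcoef R k L q v a * u5 a = T v.
Proof.
rewrite !big_sumType /= !sum0mul !addr0.
rewrite (eq_bigr (fun p : FV => (p.2 == v)%:B * ((sel p.1)%:B * clip (bs p)))); last by move=> p _; rewrite L5t.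
by rewrite (@sum_snd _ _ (fun w => w == v)) sum_delta.
Qed.

Lemma SD p : \sum_a @Dcoef R k L q p a * u5 a = Dv p.
Proof.
rewrite !big_sumType /= !sum0mul !add0r.
rewrite (eq_bigr (fun fw : FV => (fw.2 < p.1)%N%:B * ((sel fw.1)%:B * (0 < cnt fw)%N%:B))); last by move=> fw _; rewrite L5u.
rewrite (eq_bigr (fun l : K => - (l < p.2)%N%:B)); last by move=> l _; rewrite L5o mulr1.
by rewrite (@sum_snd _ _ (fun w : V => (w < p.1)%N)) sumrN sum_lt.
Qed.

Lemma L6 p : [/\ u6 (inl (inl (inl p))) = relu (T p.1 + Dv p),
  u6 (inl (inl (inr p))) = relu (T p.1 + Dv p - 1),
  u6 (inl (inr p)) = relu (Dv p) & u6 (inr p) = relu (Dv p - 1)].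
Proof.
rewrite /u6 /layer /=.
have E1 : \sum_a (@Tcoef R k L q p.1 a + @Dcoef R k L q p a) * u5 a = T p.1 + Dv p.
  by rewrite -ST -SD -big_split /=; apply: eq_bigr => a _; rewrite mulrDl.
by rewrite E1 SD !addr0; split.
Qed.

Definition u6' := u6.

Lemma sum_snd2 (j : K) (G : V * K -> R) :
  \sum_(p : V * K) (p.2 == j)%:B * G p = \sum_v G (v, j).
Proof. by rewrite (@sum_snd _ _ (fun w => w == j)) sum_delta. Qed.

Lemma Lout (j : K) : net_eval (@theNet R delta d k L q fam) x j 0 =
  \sum_v (relu (T v + Dv (v, j)) - relu (T v + Dv (v, j) - 1)
           - relu (Dv (v, j)) + relu (Dv (v, j) - 1)).
Proof.
transitivity (\sum_b (@w7 R k q j b) * u6 b + @c7 R k j).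
  by rewrite /theNet net7_eval.
rewrite /c7 addr0 !big_sumType /=.
rewrite [X in X + _ + _ + _](eq_bigr (fun p : V * K => (p.2 == j)%:B * relu (T p.1 + Dv p))); last first.
  by move=> p _; have [-> _ _ _] := L6 p.
rewrite [X in _ + X + _ + _](eq_bigr (fun p : V * K => - ((p.2 == j)%:B * relu (T p.1 + Dv p - 1))));
  last by move=> p _; have [_ -> _ _] := L6 p; rewrite mulNr.
rewrite [X in _ + _ + X + _](eq_bigr (fun p : V * K => - ((p.2 == j)%:B * relu (Dv p))));
  last by move=> p _; have [_ _ -> _] := L6 p; rewrite mulNr.
rewrite [X in _ + _ + _ + X](eq_bigr (fun p : V * K => (p.2 == j)%:B * relu (Dv p - 1)));
  last by move=> p _; have [_ _ _ ->] := L6 p.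
rewrite !sumrN !sum_snd2 -!sumrN -!big_split /=.
by apply: eq_bigr => v _.
Qed.


Lemma phiD (t D : R) : 0 <= t -> t <= 1 ->
  relu (t + D) - relu (t + D - 1) - relu D + relu (D - 1) =
  if D == 0 then t else if (1 <= D) || (D <= -1) then 0 else relu (t + D) - relu (t + D - 1) - relu D + relu (D - 1).
Proof.
move=> t0 t1; case: (eqVneq D 0) => [->|nD] /=.
  rewrite addr0 (@relu_id t) // (@relu_0 (t - 1)) ?(@relu_0 0) ?(@relu_0 (0 - 1)); lra.
case: (lerP 1 D) => h1 /=.
  rewrite (@relu_id (t + D)) ?(@relu_id (t + D - 1)) ?(@relu_id D) ?(@relu_id (D - 1)); lra.
case: (lerP D (-1)) => h2 //=.
rewrite (@relu_0 (t + D)) ?(@relu_0 (t + D - 1)) ?(@relu_0 D) ?(@relu_0 (D - 1)); lra.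
Qed.

Lemma phi (t : R) (a b : nat) : 0 <= t -> t <= 1 ->
  relu (t + (a%:R - b%:R)) - relu (t + (a%:R - b%:R) - 1) - relu (a%:R - b%:R)
  + relu (a%:R - b%:R - 1) = (a == b)%:B * t.
Proof.
move=> t0 t1; rewrite phiD //.
case: (ltngtP a b) => h.
- have h1 : a%:R + 1 <= b%:R :> R by rewrite natr1 ler_nat.
  have -> : (a%:R - b%:R == 0 :> R) = false by apply/negbTE; rewrite subr_eq0 eqr_nat neq_ltn h.
  have -> : (a%:R - b%:R <= -1 :> R) by lra.
  by rewrite orbT mul0r.
- have h1 : b%:R + 1 <= a%:R :> R by rewrite natr1 ler_nat.
  have -> : (a%:R - b%:R == 0 :> R) = false by apply/negbTE; rewrite subr_eq0 eqr_nat neq_ltn h orbT.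
  have -> : (1 <= a%:R - b%:R :> R) by lra.
  by rewrite mul0r.
- by rewrite h subrr eqxx /= mul1r.
Qed.

Definition Supp := [set i | nz i].

Lemma cnt_inj f : {in Supp &, injective (fam f)} -> forall v, (cnt (f, v) <= 1)%N.
Proof.
move=> H v; apply/card_le1_eqP => i i'; rewrite !inE => /andP[nzi /eqP fi] /andP[nzi' /eqP fi'].
by apply: H; rewrite ?inE // fi fi'.
Qed.

Lemma good_of_inj f : {in Supp &, injective (fam f)} -> ~~ bad f.
Proof.
move=> H; rewrite /bad /E lt0n negbK sum_nat_eq0; apply/forallP => v /=.
by rewrite subn_eq0 cnt_inj.
Qed.

Lemma cnt_good f : ~~ bad f -> forall v, (cnt (f, v) <= 1)%N.
Proof.
move=> nb v; move: nb; rewrite /bad /E lt0n negbK sum_nat_eq0 => /forallP /(_ v) /=.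
by rewrite subn_eq0.
Qed.

Hypothesis hex : exists f, {in Supp &, injective (fam f)}.

Lemma sel_unique : exists f0, ~~ bad f0 /\ forall f, sel f = (f == f0).
Proof.
have [f1 /good_of_inj g1] := hex.
case: (@arg_minnP _ f1 (fun f => ~~ bad f) (fun f : F => nat_of_ord f) g1) => f0 g0 min0.
exists f0; split => // f; rewrite /sel.
case: (eqVneq f f0) => [->|nf].
  rewrite g0 /= /ngood cards_eq0; apply/eqP/setP => f'; rewrite !inE.
  by apply/negP => /andP[gf' lt]; have := min0 f' gf'; rewrite leqNgt lt.
case gf: (~~ bad f) => //=.
apply/negbTE; rewrite /ngood -lt0n card_gt0; apply/set0Pn; exists f0; rewrite inE g0 /=.
by rewrite ltn_neqAle min0 // andbT; apply: contra nf => /eqP e; apply/eqP/val_inj.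
Qed.

Hypothesis hk : (0 < k)%N.
Hypothesis hsp : (#|Supp| <= k)%N.

Theorem compacts_net : compacts x (net_eval (@theNet R delta d k L q fam) x).
Proof.
have [f0 [g0 Hsel]] := sel_unique.
have Tv v : T v = clip (bs (f0, v)).
  rewrite /T (eq_bigr (fun f => (f == f0)%:B * clip (bs (f, v)))) ?sum_delta // => f _.
  by rewrite Hsel.
have Uv w : U w = (0 < cnt (f0, w))%N%:B.
  rewrite /U (eq_bigr (fun f => (f == f0)%:B * (0 < cnt (f, w))%N%:B)) ?sum_delta // => f _.
  by rewrite Hsel.
pose C := fun v : V => #|[set w : V | (0 < cnt (f0, w))%N & (w < v)%N]|.
have Dvv v (j : K) : Dv (v, j) = (C v)%:R - (j : nat)%:R.
  rewrite /Dv /=; congr (_ - _).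
  rewrite (eq_bigr (fun w : V => (w < v)%N%:B * (0 < cnt (f0, w))%N%:B)); last by move=> w _; rewrite Uv.
  by rewrite sum_bb.
have y_eq (j : K) : net_eval (@theNet R delta d k L q fam) x j 0 =
    \sum_v (C v == j)%:B * clip (bs (f0, v)).
  rewrite Lout; apply: eq_bigr => v _; rewrite Tv Dvv phi //.
    exact/clip_ge0/bs_ge0.
  exact: clip_le1.
have cnt1 := cnt_good g0.
have uniq_i i i' : nz i -> nz i' -> fam f0 i = fam f0 i' -> i = i'.
  move=> nzi nzi' e; have := cnt1 (fam f0 i).
  move/card_le1_eqP => /(_ i' i); rewrite !inE nzi nzi' e eqxx /=.
  by move=> /(_ isT isT).
have bs_nz i : nz i -> bs (f0, fam f0 i) = xi i.
  move=> nzi; rewrite /bs (bigD1 i) //= big1 ?addr0 // => i' /andP[/eqP e ne].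
  case: (eqVneq (xi i') 0) => // nz'.
  by move: ne; rewrite (uniq_i i' i nz' nzi e) eqxx.
have bs_empty v : cnt (f0, v) = 0%N -> bs (f0, v) = 0.
  move=> c0; rewrite /bs big1 // => i' /= /eqP e.
  case: (eqVneq (xi i') 0) => // nz'; move: c0; rewrite /cnt => /eqP.
  by rewrite cards_eq0 => /eqP/setP/(_ i'); rewrite !inE /nz nz' e eqxx.
have clip0 : clip 0 = 0 by rewrite /clip min_l.
have cnt_pos i : nz i -> (0 < cnt (f0, fam f0 i))%N.
  by move=> nzi; rewrite card_gt0; apply/set0Pn; exists i; rewrite inE nzi /=.
have clip_x i : nz i -> clip (bs (f0, fam f0 i)) = xi i.
  by move=> nzi; rewrite bs_nz // /clip min_l // xle1.
pose NE := [set w : V | (0 < cnt (f0, w))%N].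
have CU (v : V) : (0 < cnt (f0, v))%N -> forall v2 : V, (v < v2)%N ->
    (v |: [set w : V | (0 < cnt (f0, w))%N & (w < v)%N]) \subset
    [set w : V | (0 < cnt (f0, w))%N & (w < v2)%N].
  move=> cv v2 lt; apply/fintype.subsetP => w; rewrite !inE.
  case/orP => [/eqP ->|/andP[-> h]]; first by rewrite cv lt.
  by rewrite (ltn_trans h lt).
have Cmono (v1 v2 : V) : (0 < cnt (f0, v1))%N -> (v1 < v2)%N -> (C v1 < C v2)%N.
  move=> c1 lt; have := subset_leq_card (CU v1 c1 v2 lt).
  by rewrite cardsU1 inE ltnn andbF /= add1n.
have Cinj (v1 v2 : V) : (0 < cnt (f0, v1))%N -> (0 < cnt (f0, v2))%N -> C v1 = C v2 -> v1 = v2.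
  move=> c1 c2 e; apply: val_inj; case: (ltngtP v1 v2) => // h.
    by have := Cmono _ _ c1 h; rewrite e ltnn.
  by have := Cmono _ _ c2 h; rewrite e ltnn.
have NEle : (#|NE| <= k)%N.
  apply: leq_trans hsp; apply: (leq_trans _ (leq_imset_card (fam f0) Supp)).
  apply: subset_leq_card; apply/fintype.subsetP => w; rewrite inE card_gt0 => /set0Pn [i].
  by rewrite inE /= => /andP[nzi /eqP <-]; apply: imset_f; rewrite inE.
have Clt i : nz i -> (C (fam f0 i) < k)%N.
  move=> nzi; apply: leq_trans NEle.
  have sub : (fam f0 i |: [set w : V | (0 < cnt (f0, w))%N & (w < fam f0 i)%N]) \subset NE.
    apply/fintype.subsetP => w; rewrite !inE; case/orP => [/eqP ->|/andP[-> _]] //.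
    exact: cnt_pos.
  by have := subset_leq_card sub; rewrite cardsU1 inE ltnn andbF /= add1n.
pose sigma := fun i => insubd (Ordinal hk) (C (fam f0 i)) : 'I_k.
have sigmaE i : nz i -> val (sigma i) = C (fam f0 i).
  by move=> nzi; rewrite val_insubd Clt.
exists sigma; split; [|split].
- move=> i i'; rewrite !inE => nzi nzi' e.
  have := congr1 val e; rewrite !sigmaE // => /(Cinj _ _ (cnt_pos _ nzi) (cnt_pos _ nzi')).
  exact: uniq_i.
- move=> i nzi; rewrite y_eq (bigD1 (fam f0 i)) //= sigmaE // eqxx mul1r clip_x //.
  rewrite big1 ?addr0 // => v nv.
  case: (posnP (cnt (f0, v))) => [c0|cp]; first by rewrite bs_empty // clip0 mulr0.
  case: (eqVneq (C v) (C (fam f0 i))) => [e|ne]; last by rewrite mul0r.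
  by move: nv; rewrite (Cinj _ _ cp (cnt_pos _ nzi) e) eqxx.
- move=> j Hj; rewrite y_eq big1 // => v _.
  case: (posnP (cnt (f0, v))) => [c0|cp]; first by rewrite bs_empty // clip0 mulr0.
  move: cp; rewrite card_gt0 => /set0Pn [i]; rewrite inE /= => /andP[nzi /eqP e].
  have := Hj i nzi; rewrite -(inj_eq val_inj) sigmaE // e => /negbTE ->.
  by rewrite mul0r.
Qed.

End Sem.
Section RealB.
Variable R : realType.

Lemma log_bound (g : R) (d t : nat) : 0 < g -> (0 < d)%N -> (2 ^ t <= 2 * d)%N ->
  (t.+1)%:R <= (2 + 1 / (g * ln 2)) * (d%:R `^ g).
Proof.
move=> g0 d0 ht.
set D : R := d%:R.
have D1 : 1 <= D by rewrite /D ler1n.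
have Dp : 0 < D by apply: lt_le_trans D1.
have Dg1 : 1 <= D `^ g by rewrite -(powRr0 D) ler_powR // ltW.
have l2 : 0 < ln (2 : R) by apply: ln_gt0; rewrite ltr1n.
have H1 : t%:R * ln 2 <= ln 2 + ln D.
  have -> : t%:R * ln 2 = ln ((2 : R) ^+ t) by rewrite lnXn // mulr_natl.
  rewrite -lnM ?posrE // ?ltr0n //.
  rewrite ler_ln ?posrE ?exprn_gt0 ?mulr_gt0 //.
  by rewrite /D -natrX -natrM ler_nat.
have H2 : 1 + g * ln D <= D `^ g.
  have -> : D `^ g = expR (ln (D `^ g)) by rewrite lnK // posrE powR_gt0.
  by rewrite ln_powR expR_ge1Dx.
set c := g * ln 2.
have c0 : 0 < c by rewrite mulr_gt0.
have H3 : c * (t%:R - 1) <= D `^ g - 1.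
  apply: le_trans (_ : g * ln D <= _); last by lra.
  rewrite /c -mulrA ler_pM2l //; lra.
have H4 : t%:R - 1 <= (D `^ g - 1) / c by rewrite ler_pdivlMr // mulrC.
have H5 : (D `^ g - 1) / c <= D `^ g / c by rewrite ler_pM2r ?invr_gt0 //; lra.
rewrite mulrDl div1r [c^-1 * _]mulrC -natr1.
lra.
Qed.

Lemma width_real (eps g : R) (d k t : nat) : 0 < eps -> 0 < g -> (0 < d)%N ->
  k%:R <= d%:R `^ eps -> (2 ^ t <= 2 * d)%N ->
  (2 * d + 37 * (k ^ 3 * t.+1))%:R <=
  (2 + 37 * (2 + 1 / (g * ln 2))) * d%:R `^ Num.max (4 * eps + 2 * g) 1.
Proof.
move=> e0 g0 d0 hk ht.
set D : R := d%:R.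
set M := Num.max (4 * eps + 2 * g) 1.
set c := 2 + 1 / (g * ln 2).
have D1 : 1 <= D by rewrite /D ler1n.
have D0 : 0 <= D by apply: le_trans D1.
have hD : D <= D `^ M.
  by rewrite -{1}(powRr1 D0) ler_powR // le_max lexx orbT.
have hm := log_bound g0 d0 ht.
have c0 : 0 <= c.
  rewrite /c; apply: addr_ge0 => //; apply: divr_ge0 => //; apply: ltW.
  by rewrite mulr_gt0 // ln_gt0 // ltr1n.
have hk3 : (k%:R : R) ^+ 3 <= D `^ (3 * eps).
  rewrite mulrC powRrM powR_mulrn ?powR_ge0 //.
  by rewrite lerXn2r // ?nnegrE ?powR_ge0.
have hE : D `^ (3 * eps) * D `^ g <= D `^ M.
  rewrite -powRD; last by apply/implyP => _; rewrite gt_eqF // (lt_le_trans ltr01 D1).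
  rewrite ler_powR // le_max; apply/orP; left; lra.
have hkm : (k ^ 3 * t.+1)%:R <= c * D `^ M.
  rewrite natrM natrX.
  apply: le_trans (_ : D `^ (3 * eps) * (c * D `^ g) <= _).
    by apply: ler_pM => //; apply: exprn_ge0.
  by rewrite mulrCA; apply: ler_wpM2l.
move: hkm; set Y := (k ^ 3 * t.+1)%N => hkm; clearbody Y.
rewrite natrD !natrM [X in _ <= X]mulrDl -mulrA -/D.
have -> : (2%:R : R) = 2 by []. have -> : (37%:R : R) = 37 by [].
lra.
Qed.
End RealB.
Definition zeroNet (R : realType) (d k : nat) : relu_net R d k :=
  @net7 R d k 'I_0 'I_0 'I_0 'I_0 'I_0 'I_0
    (fun _ _ => 0) (fun _ => 0) (fun _ _ => 0) (fun _ => 0) (fun _ _ => 0) (fun _ => 0)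
    (fun _ _ => 0) (fun _ => 0) (fun _ _ => 0) (fun _ => 0) (fun _ _ => 0) (fun _ => 0)
    (fun _ _ => 0) (fun _ => 0).

Theorem propositionD4 (R : realType) (eps gamma : R) :
  0 < eps -> 0 < gamma ->
  exists C : R, 0 < C /\
  forall (delta : R) (d : nat), 0 < delta -> (0 < d)%N ->
    1 / ((2 * eps + gamma) `^ (1 / gamma)) <= d%:R ->
    exists N : relu_net R d (Num.truncn ((d%:R : R) `^ eps)),
      [/\ net_depth N = 7%N,
          (net_width N)%:R <= C * (d%:R `^ Num.max (4 * eps + 2 * gamma) 1),
          net_weights_bounded (1 / delta) N
        & forall x : 'cV[R]_d, sparse eps x -> in_S delta x ->
            compacts x (net_eval N x)].
Proof.
move=> e0 g0.
have l2 : 0 < ln (2 : R) by apply: ln_gt0; rewrite ltr1n.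
have c0 : 0 <= 2 + 1 / (gamma * ln 2) :> R.
  by apply: addr_ge0 => //; apply: divr_ge0 => //; apply: ltW; rewrite mulr_gt0.
exists (2 + 37 * (2 + 1 / (gamma * ln 2))); split.
  move: c0; set c := (2 + _ : R); lra.
move=> delta d dl0 d0 _.
set k := Num.truncn (d%:R `^ eps).
have kD : (k%:R <= d%:R `^ eps) by rewrite truncn_le powR_ge0.
have k1 : (0 < k)%N.
  rewrite truncn_gt0; apply: le_trans (_ : d%:R `^ 0 <= _); first by rewrite powRr0.
  by rewrite ler_powR ?ler1n // ltW.
set t := trunc_log 2 d.+1.
have ht : (2 ^ t <= 2 * d)%N.
  apply: (leq_trans (trunc_logP _ _)) => //; lia.
have [fam Hfam] := hash_family d k.
case: (lerP delta 1) => hd.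
- exists (@theNet R delta d k _ _ fam); split.
  + exact: net7_depth.
  + rewrite net7_width /B1 /B2 /B3 /B4 /B5 /B6 !card_sum !card_prod !card_ord.
    apply: le_trans (width_real e0 g0 d0 kD ht); rewrite ler_nat.
    apply: (@leq_trans (2 * d + 3 * (k * t.+1).+1 + 3 * ((k * t.+1).+1 * (2 * k ^ 2).+1)
       + 4 * ((2 * k ^ 2).+1 * k) + k)); last by nia.
    rewrite !geq_max; repeat (apply/andP; split); lia.
  + exact: theNet_bounded.
  + move=> x hs [hx _].
    have hsp : (#|Supp x| <= k)%N by rewrite /k truncn_ge_nat ?powR_ge0.
    have [l Hl] := Hfam _ hsp.
    exact: (compacts_net dl0 hx (ex_intro _ l Hl) k1 hsp).
- exists (zeroNet R d k); split.
  + by [].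
  + rewrite /zeroNet net7_width !card_ord /=.
    by apply: mulr_ge0; [move: c0; set c := (2 + _ : R); lra | exact: powR_ge0].
  + by apply: net7_bounded => *; rewrite normr0 divr_ge0 // ltW.
  + move=> x _ [hx _].
    have z i : x i 0 = 0.
      by case: (eqVneq (x i 0) 0) => // nz; have := hx i nz; lra.
    exists (fun _ => Ordinal k1); split; [|split].
    * by move=> i j; rewrite inE z eqxx.
    * by move=> i; rewrite z eqxx.
    * by move=> j _; rewrite net7_eval /= big_ord0 addr0.
Qed.
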